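(* Let $\mathbb{F}$ be a finite field, $n\ge2$, and let $S$ be an isolated subsemigroup of $M(n,\mathbb{F})$. Suppose one of the following holds: (1) $S$ contains the zero matrix; (2) $S$ contains two idempotents $e(V_1,V_2)$ and $e(V'_1,V'_2)$ of rank $n-1$ with $V_2\subseteq V'_1$; (3) $S$ contains an idempotent of rank at most $n-2$. Then $I_{n-1}\subseteq S$.
   Context: $M(n,\mathbb{F})$ is the semigroup of $n\times n$ matrices over $\mathbb{F}$, identified with linear operators on $\mathbb{F}^n$. For a direct sum decomposition $\mathbb{F}^n=V_1\oplus V_2$, $e(V_1,V_2)$ denotes the idempotent projection onto $V_1$ along $V_2$ (every idempotent of $M(n,\mathbb{F})$ is of this form). $I_{n-1}$ is the set of all matrices of rank at most $n-1$. A subsemigroup $T$ of a semigroup $S$ is isolated if for all $x\in S$ and positive integers $m$, $x^m\in T$ implies $x\in T$. *)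

(* Defs.v *)
(* Matrices act on row vectors: x |-> x *m A. *)
From HB Require Import structures.
From mathcomp Require Import all_boot all_order all_algebra.
Set Implicit Arguments. Unset Strict Implicit. Unset Printing Implicit Defensive.
Import GRing.Theory.
Local Open Scope ring_scope.

(* m-th power of a square matrix (general n, not nec. of the form n.+1) *)
Definition mxpow (F : fieldType) (n : nat) (A : 'M[F]_n) (m : nat) : 'M[F]_n :=
  iter m (mulmx A) 1%:M.

Definition subsemigroup (F : fieldType) (n : nat) (S : {pred 'M[F]_n}) : Prop :=
  forall A B, A \in S -> B \in S -> A *m B \in S.

Definition isolated (F : fieldType) (n : nat) (S : {pred 'M[F]_n}) : Prop :=
  forall (x : 'M[F]_n) (m : nat), (0 < m)%N -> mxpow x m \in S -> x \in S.

Definition dirsum_full (F : fieldType) (n : nat) (V1 V2 : 'M[F]_n) : Prop :=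
  (V1 :&: V2 == (0 : 'M[F]_n))%MS /\ (V1 + V2 == 1%:M)%MS.

Definition eproj (F : fieldType) (n : nat) (V1 V2 : 'M[F]_n) : 'M[F]_n :=
  proj_mx V1 V2.

Definition idem_mx (F : fieldType) (n : nat) (A : 'M[F]_n) : Prop :=
  A *m A = A.

(* Main.v *)
Require Import Defs.
From HB Require Import structures.
From mathcomp Require Import all_boot all_order all_algebra zify.
Set Implicit Arguments. Unset Strict Implicit. Unset Printing Implicit Defensive.
Import GRing.Theory.
Local Open Scope ring_scope.

Lemma ordE n (x y : 'I_n) : (nat_of_ord x == nat_of_ord y) = (x == y).
Proof. by []. Qed.

Lemma pid_delta (F : fieldType) n r (a b : 'I_n) :
  (pid_mx r : 'M[F]_n) *m delta_mx a b = if (a < r)%N then delta_mx a b else 0.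
Proof.
apply/matrixP => i l; rewrite !mxE (bigD1 a) //= big1 ?addr0.
  rewrite !mxE eqxx /= -natrM mulnb; case: ifP => h; rewrite ?mxE;
  by rewrite ordE; case: (eqVneq i a) => [->|_] /=; rewrite ?eqxx ?h ?andbF ?mulr0n.
by move=> k /negPf ka; rewrite !mxE ka mulr0.
Qed.

Lemma delta_pid (F : fieldType) n r (a b : 'I_n) :
  delta_mx a b *m (pid_mx r : 'M[F]_n) = if (b < r)%N then delta_mx a b else 0.
Proof.
apply/matrixP => i l; rewrite !mxE (bigD1 b) //= big1 ?addr0.
  rewrite !mxE eqxx andbT -natrM mulnb ordE; case: ifP => h; rewrite ?mxE;
  by rewrite ?andbT ?andbF ?mulr0n // (eq_sym b l).
by move=> k /negPf kb; rewrite !mxE kb andbF mul0r.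
Qed.

Lemma pidS (F : fieldType) n (j : 'I_n) :
  (pid_mx j.+1 : 'M[F]_n) = pid_mx j + delta_mx j j.
Proof.
apply/matrixP => i l; rewrite !mxE ltnS leq_eqVlt !ordE.
case: (eqVneq i j) => [->|ne] /=.
  by rewrite ltnn andbF add0r andbT (eq_sym l j).
by rewrite addr0.
Qed.
Lemma sq_iso (F : fieldType) n (S : {pred 'M[F]_n}) (x : 'M[F]_n) :
  isolated S -> x *m x \in S -> x \in S.
Proof.
move=> iso h; apply: (iso x 2 isT); by rewrite /mxpow /= mulmx1.
Qed.

Lemma pid_up (F : fieldType) n (S : {pred 'M[F]_n}) (k k1 : 'I_n) :
  subsemigroup S -> isolated S -> nat_of_ord k1 = (nat_of_ord k).+1 ->
  (pid_mx k : 'M[F]_n) \in S -> (pid_mx k.+1 : 'M[F]_n) \in S.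
Proof.
move=> sub iso hk1 hP.
have f1 : (k1 < k)%N = false by rewrite hk1 ltnNge leqnSn.
have f2 : (k1 == k) = false by rewrite -ordE hk1 (gtn_eqF (ltnSn k)).
have f3 : (k == k1) = false by rewrite eq_sym.
have pp : (pid_mx k : 'M[F]_n) *m (pid_mx k : 'M[F]_n) = pid_mx k by apply: pid_mx_id; apply: ltnW.
set a := (pid_mx k : 'M[F]_n) + delta_mx k k1.
set b := (pid_mx k : 'M[F]_n) + delta_mx k1 k.
have ha : a \in S.
  apply: sq_iso => //; rewrite /a !mulmxDl !mulmxDr pp !pid_delta !delta_pid ?ltnn ?f1.
  by rewrite mul_delta_mx_cond f2 /= mulr0n !addr0.
have hb : b \in S.
  apply: sq_iso => //; rewrite /b !mulmxDl !mulmxDr pp !pid_delta !delta_pid ?ltnn ?f1.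
  by rewrite mul_delta_mx_cond f3 /= mulr0n !addr0.
have := sub _ _ ha hb.
rewrite /a /b !mulmxDl !mulmxDr pp !pid_delta !delta_pid ?ltnn ?f1 mul_delta_mx.
by rewrite addr0 add0r -pidS.
Qed.

Lemma pid_down (F : fieldType) n (S : {pred 'M[F]_n}) (m k : 'I_n) :
  subsemigroup S -> isolated S -> nat_of_ord k = (nat_of_ord m).+1 ->
  (pid_mx k : 'M[F]_n) \in S -> (pid_mx k.+1 : 'M[F]_n) \in S ->
  (pid_mx m : 'M[F]_n) \in S.
Proof.
move=> sub iso hk h1 h2.
have f1 : (k < m)%N = false by rewrite hk ltnNge leqnSn.
have f2 : (k == m) = false by rewrite -ordE hk (gtn_eqF (ltnSn m)).
have f3 : (m == k) = false by rewrite eq_sym.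
have pp : (pid_mx m : 'M[F]_n) *m (pid_mx m : 'M[F]_n) = pid_mx m by apply: pid_mx_id; apply: ltnW.
have ek : (pid_mx k : 'M[F]_n) = pid_mx m + delta_mx m m by rewrite hk pidS.
set x := (pid_mx m : 'M[F]_n) + delta_mx m k + delta_mx k m.
have hx : x \in S.
  apply: sq_iso => //; move: h2; rewrite pidS ek.
  rewrite /x !mulmxDl !mulmxDr pp !pid_delta !delta_pid ?ltnn ?f1.
  rewrite !mul_delta_mx_cond ?f2 ?f3 ?eqxx /= !mulr0n !mulr1n !addr0 !add0r.
  by rewrite -!addrA.
have := sub _ _ (sub _ _ h1 hx) h1.
rewrite ek /x !mulmxDl !mulmxDr pp !pid_delta !delta_pid ?ltnn ?f1.
rewrite !mul_delta_mx_cond ?f2 ?f3 ?eqxx /= !mulr0n !mulr1n !addr0 !add0r.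
rewrite pp !pid_delta !delta_pid ?ltnn ?f1.
by rewrite mul_delta_mx_cond f2 /= mulr0n !addr0.
Qed.
Lemma idem_sim (F : fieldType) n (e : 'M[F]_n) : e *m e = e ->
  exists P Pi : 'M[F]_n,
    [/\ P *m Pi = 1%:M, Pi *m P = 1%:M & e = Pi *m pid_mx (\rank e) *m P].
Proof.
move=> ee.
set L := col_ebase e; set U := row_ebase e.
set D := (pid_mx (\rank e) : 'M[F]_n).
have He : L *m D *m U = e by exact: mulmx_ebase.
have uL : L \in unitmx by exact: col_ebase_unit.
have uU : U \in unitmx by exact: row_ebase_unit.
set M := U *m L.
have DD : D *m D = D by apply: pid_mx_id; apply: rank_leq_col.
have DMD : D *m M *m D = D.
  have : invmx L *m (e *m e) *m invmx U = invmx L *m e *m invmx U by rewrite ee.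
  rewrite -He /M.
  rewrite !mulmxA mulVmx // mul1mx -!mulmxA mulmxV // mulmx1.
  by rewrite !mulmxA.
set N := D *m M *m (1%:M - D).
have ND : (1%:M - D) *m D = 0 by rewrite mulmxBl mul1mx DD subrr.
have NN : N *m N = 0.
  by rewrite /N -!mulmxA [(1%:M - D) *m _]mulmxA ND mul0mx !mulmx0.
set Q := 1%:M + N; set Qi := 1%:M - N.
have QQi : Q *m Qi = 1%:M.
  by rewrite /Q /Qi mulmxDl !mulmxBr !mul1mx mulmx1 NN subr0 subrK.
have QiQ : Qi *m Q = 1%:M.
  by rewrite /Q /Qi mulmxBl !mulmxDr !mul1mx mulmx1 NN addr0 addrK.
have QiD : Qi *m D = D.
  by rewrite /Qi mulmxBl mul1mx /N -!mulmxA ND !mulmx0 subr0.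
have DQ : D *m Q = D *m M.
  have DMD2 : D *m U *m L *m D = D by rewrite -[RHS]DMD /M !mulmxA.
  rewrite /Q mulmxDr mulmx1 /N !mulmxA DD mulmxBr mulmx1 DMD2.
  by rewrite addrC subrK.
exists (Q *m invmx L), (L *m Qi); split.
- by rewrite -mulmxA [invmx L *m _]mulmxA mulVmx // mul1mx QQi.
- by rewrite -mulmxA [Qi *m _]mulmxA QiQ mul1mx mulmxV.
- rewrite -He -[L *m Qi *m D]mulmxA QiD -!mulmxA; congr (_ *m _).
  by rewrite mulmxA DQ /M -!mulmxA mulmxV // mulmx1.
Qed.
Lemma mxpowS (F : fieldType) n (A : 'M[F]_n) m : mxpow A m.+1 = A *m mxpow A m.
Proof. by []. Qed.

Lemma mxpowD (F : fieldType) n (A : 'M[F]_n) a b :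
  mxpow A (a + b) = mxpow A a *m mxpow A b.
Proof.
elim: a => [|a IH]; first by rewrite add0n /mxpow /= mul1mx.
by rewrite addSn !mxpowS IH mulmxA.
Qed.

Lemma mxpowM (F : fieldType) n (A : 'M[F]_n) a b :
  mxpow A (a * b) = mxpow (mxpow A a) b.
Proof.
elim: b => [|b IH]; first by rewrite muln0.
by rewrite mulnS mxpowD IH mxpowS.
Qed.

Lemma mxpow_idem (F : finFieldType) n (A : 'M[F]_n) :
  exists k, (0 < k)%N /\ mxpow A k *m mxpow A k = mxpow A k.
Proof.
have [N HN] : exists N, #|{: 'M[F]_n}| = N by eexists.
pose f := fun i : 'I_N.+2 => mxpow A i.+1.
have : ~~ injectiveb f.
  apply/negP => /injectiveP inj; have := @leq_card _ _ f inj.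
  rewrite card_ord HN => /ltnW; by rewrite ltnn.
case/injectivePn => i [j ij fij].
wlog lij : i j ij fij / (i < j)%N.
  move=> W; case: (ltngtP i j) => h; first exact: (W i j).
  - by apply: (W j i); rewrite 1?eq_sym.
  - by move: ij; rewrite -val_eqE /= h eqxx.
set p := (j - i)%N.
have Hp : forall m, (i.+1 <= m)%N -> mxpow A (m + p) = mxpow A m.
  move=> m hm.
  have fij' : mxpow A i.+1 = mxpow A j.+1 by exact: fij.
  have e1 : (m + p = (m - i.+1) + j.+1)%N by rewrite /p; lia.
  have e2 : (m = (m - i.+1) + i.+1)%N by lia.
  by rewrite e1 [in RHS]e2 !mxpowD fij'.
have Hpt : forall t m, (i.+1 <= m)%N -> mxpow A (m + t * p) = mxpow A m.
  elim=> [|t IH] m hm; first by rewrite mul0n addn0.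
  rewrite mulSn addnA IH ?Hp //; exact: (leq_trans hm (leq_addr _ _)).
have p0 : (0 < p)%N by rewrite subn_gt0.
exists (i.+1 * p)%N; split; first by rewrite muln_gt0 p0.
rewrite -mxpowD Hpt //.
by rewrite -[X in (X <= _)%N]muln1 leq_mul2l p0 orbT.
Qed.

Definition conjS (F : fieldType) n (S : {pred 'M[F]_n}) (P Pi : 'M[F]_n)
  : {pred 'M[F]_n} := [pred M | Pi *m M *m P \in S].
Arguments conjS {F n}.

Lemma mxpow_conj (F : fieldType) n (P Pi x : 'M[F]_n) m :
  P *m Pi = 1%:M -> Pi *m P = 1%:M ->
  mxpow (Pi *m x *m P) m = Pi *m mxpow x m *m P.
Proof.
move=> h1 h2; elim: m => [|m IH]; first by rewrite /mxpow /= mulmx1.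
rewrite !mxpowS IH -!mulmxA; congr (_ *m _). by rewrite (mulmxA P) h1 mul1mx.
Qed.

Lemma conj_ok (F : fieldType) n (S : {pred 'M[F]_n}) (P Pi : 'M[F]_n) :
  P *m Pi = 1%:M -> Pi *m P = 1%:M -> subsemigroup S -> isolated S ->
  subsemigroup (conjS S P Pi) /\ isolated (conjS S P Pi).
Proof.
move=> h1 h2 sub iso; split.
  move=> A B; rewrite !inE => hA hB.
  have := sub _ _ hA hB.
  by rewrite -!mulmxA [P *m (Pi *m _)]mulmxA h1 mul1mx.
move=> x m m0; rewrite !inE => hx; apply: (iso _ m m0).
by rewrite mxpow_conj.
Qed.

Lemma all_pid (F : fieldType) n (S : {pred 'M[F]_n}) :
  subsemigroup S -> isolated S -> (0 : 'M[F]_n) \in S ->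
  forall r, (r <= n.-1)%N -> (pid_mx r : 'M[F]_n) \in S.
Proof.
move=> sub iso h0; elim=> [|r IH] hr; first by rewrite pid_mx_0.
have hr1 : (r.+1 < n)%N by lia.
have hr0 : (r < n)%N by apply: ltnW.
exact: (@pid_up F n S (Ordinal hr0) (Ordinal hr1) sub iso erefl (IH (ltnW hr))).
Qed.

Lemma descend (F : fieldType) n (S : {pred 'M[F]_n}) :
  subsemigroup S -> isolated S ->
  forall r, (r <= n - 2)%N -> (pid_mx r : 'M[F]_n) \in S -> (0 : 'M[F]_n) \in S.
Proof.
move=> sub iso; elim=> [|j IH] hr hP; first by rewrite pid_mx_0 in hP.
have h2 : (j.+2 < n)%N by lia.
have h1 : (j.+1 < n)%N by apply: ltnW.
have h0 : (j < n)%N by apply: ltnW.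
have hu := @pid_up F n S (Ordinal h1) (Ordinal h2) sub iso erefl hP.
have hd := @pid_down F n S (Ordinal h0) (Ordinal h1) sub iso erefl hP hu.
exact: (IH (ltnW hr) hd).
Qed.

Lemma mxpow_in (F : fieldType) n (S : {pred 'M[F]_n}) (x : 'M[F]_n) k :
  subsemigroup S -> x \in S -> (0 < k)%N -> mxpow x k \in S.
Proof.
move=> sub hx; elim: k => [|k IH] // _.
case: k IH => [|k] IH; first by rewrite /mxpow /= mulmx1.
by rewrite mxpowS; apply: sub => //; apply: IH.
Qed.

Lemma zero_all (F : finFieldType) n (S : {pred 'M[F]_n}) :
  subsemigroup S -> isolated S -> (0 : 'M[F]_n) \in S ->
  forall A : 'M[F]_n, (\rank A <= n.-1)%N -> A \in S.
Proof.
move=> sub iso h0 A hA.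
have [k [k0 idk]] := mxpow_idem A.
apply: (iso A k k0).
have hr : (\rank (mxpow A k) <= n.-1)%N.
  case: k k0 {idk} => [|k] // _; rewrite mxpowS.
  exact: leq_trans (mxrankM_maxl _ _) hA.
have [P [Pi [h1 h2 he]]] := idem_sim idk.
have [sub' iso'] := conj_ok h1 h2 sub iso.
have h0' : (0 : 'M[F]_n) \in conjS S P Pi by rewrite inE mulmx0 mul0mx.
have := all_pid sub' iso' h0' hr.
by rewrite inE -he.
Qed.

Lemma idem_zero (F : fieldType) n (S : {pred 'M[F]_n}) (e : 'M[F]_n) :
  subsemigroup S -> isolated S -> e \in S -> e *m e = e ->
  (\rank e <= n - 2)%N -> (0 : 'M[F]_n) \in S.
Proof.
move=> sub iso hS ee hr.
have [P [Pi [h1 h2 he]]] := idem_sim ee.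
have [sub' iso'] := conj_ok h1 h2 sub iso.
have hp : (pid_mx (\rank e) : 'M[F]_n) \in conjS S P Pi by rewrite inE -he.
have := descend sub' iso' hr hp.
by rewrite inE mulmx0 mul0mx.
Qed.

Lemma eq0_ms (F : fieldType) n (X : 'M[F]_n) : (X == (0 : 'M[F]_n))%MS -> X = 0.
Proof. by case/andP; rewrite submx0 => /eqP. Qed.

Lemma case2 (F : finFieldType) n (S : {pred 'M[F]_n}) (V1 V2 W1 W2 : 'M[F]_n) :
  (2 <= n)%N -> subsemigroup S ->
  dirsum_full V1 V2 -> dirsum_full W1 W2 ->
  eproj V1 V2 \in S -> eproj W1 W2 \in S ->
  \rank (eproj V1 V2) = n.-1 -> \rank (eproj W1 W2) = n.-1 ->
  (V2 <= W1)%MS ->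
  exists e : 'M[F]_n, [/\ e \in S, e *m e = e & (\rank e <= n - 2)%N].
Proof.
move=> hn sub [dV sV] [dW sW] he1 he2 r1 r2 sVW.
have dV0 := eq0_ms dV; have dW0 := eq0_ms dW.
set e1 := eproj V1 V2 in he1 r1; set e2 := eproj W1 W2 in he2 r2.
set q := e2 *m e1.
have hq : q \in S by exact: sub.
have rV1 : (\rank V1 <= n.-1)%N.
  rewrite -r1 -{1}(@proj_mx_id _ _ _ V1 V2 V1 dV0 (submx_refl V1)).
  exact: mxrankM_maxr.
have rV2 : (1 <= \rank V2)%N.
  have := mxrank_sum_cap V1 V2; rewrite dV0 mxrank0 addn0.
  rewrite (eqmxP sV) mxrank1 => h; lia.
have rW1 : (\rank W1 <= n.-1)%N.
  rewrite -r2 -{1}(@proj_mx_id _ _ _ W1 W2 W1 dW0 (submx_refl W1)).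
  exact: mxrankM_maxr.
have rq : (\rank q <= n - 2)%N.
  have se2 : (e2 <= W1)%MS.
    by have := proj_mx_sub W1 W2 (1%:M : 'M[F]_n); rewrite mul1mx.
  have le1 : (\rank q <= \rank (W1 *m e1))%N by apply: mxrankS; apply: submxMr.
  have := mxrank_mul_ker W1 e1.
  have sk : (V2 <= W1 :&: kermx e1)%MS.
    by rewrite sub_capmx sVW sub_kermx /e1 /eproj (proj_mx_0 dV0 (submx_refl V2)) eqxx.
  have := mxrankS sk; move=> a b.
  have c : (\rank (W1 *m e1) + 1 <= n.-1)%N.
    by apply: leq_trans rW1; rewrite -b leq_add2l (leq_trans rV2 a).
  lia.
have [k [k0 idk]] := mxpow_idem q.
exists (mxpow q k); split => //; first exact: mxpow_in.
case: k k0 {idk} => [|k] // _; rewrite mxpowS.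
exact: leq_trans (mxrankM_maxl _ _) rq.
Qed.

Unset Implicit Arguments.
Set Strict Implicit.

Theorem lemma27 (F : finFieldType) (n : nat) (hn : (2 <= n)%N)
  (S : {pred 'M[F]_n}) :
  subsemigroup S -> isolated S ->
  ( (0 : 'M[F]_n) \in S
    \/ (exists V1 V2 W1 W2 : 'M[F]_n,
          [/\ dirsum_full V1 V2 /\ dirsum_full W1 W2,
              eproj V1 V2 \in S /\ eproj W1 W2 \in S,
              \rank (eproj V1 V2) = n.-1 /\ \rank (eproj W1 W2) = n.-1
            & (V2 <= W1)%MS])
    \/ (exists e : 'M[F]_n, [/\ e \in S, idem_mx e & (\rank e <= n - 2)%N]) ) ->
  forall A : 'M[F]_n, (\rank A <= n.-1)%N -> A \in S.
Proof.
move=> sub iso H; apply: zero_all => //.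
case: H => [//|[]].
  case=> V1 [V2 [W1 [W2 [[d1 d2] [h1 h2] [r1 r2] sVW]]]].
  have [e [he ee re]] := case2 hn sub d1 d2 h1 h2 r1 r2 sVW.
  exact: idem_zero sub iso he ee re.
case=> e [he ee re].
exact: idem_zero sub iso he ee re.
Qed.
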